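(* (Setting as in the context.) Let $\bar u\in\mathcal U$, $\bar y\in\mathcal Y$, $\bar v\in\mathcal V$, $\bar z\in\mathcal Z$, $\bar x\in\mathcal X$ be given and $\bar\gamma:=-\Gamma(\bar u,\bar y,\bar v,\bar z)$. Define, with $\mathcal A_0:=\mathcal F$, $$\bar\beta_{p,j}:=\mathcal A_{j-1}\mathcal A_p^*\mathcal E_{\theta_p}^{-1}(b_p-\mathcal A_p\bar x-\mathcal P_p\bar y_p+\sigma\mathcal A_p\bar\gamma),\quad j=1,\dots,p,$$ and for $i=p-1,\dots,1$, $$\bar\beta_{i,j}:=\mathcal A_{j-1}\mathcal A_i^*\mathcal E_{\theta_i}^{-1}\Big(b_i-\sum_{k=i+1}^p\bar\beta_{k,i+1}-\mathcal A_i\bar x-\mathcal P_i\bar y_i+\sigma\mathcal A_i\bar\gamma\Big),\quad j=1,\dots,i,$$ and $\bar\delta_\theta:=\sum_{i=1}^p\bar\beta_{i,1}\in\mathcal U$. For $i=p,p-1,\dots,1$ define (with $y'_{\ge p+1}$ empty) $$y'_i:=\operatorname{argmin}_{y_i}\ \mathcal L_\sigma(\bar u,(\bar y_{\le i-1},y_i,y'_{\ge i+1}),\bar v,\bar z;\bar x)+\tfrac\sigma2\|y_i-\bar y_i\|^2_{\mathcal T_{\theta_i}}.$$ Let $$(u^+,y^+):=\operatorname{argmin}_{u,y}\ \mathcal L_\sigma(u,y,\bar v,\bar z;\bar x)+\tfrac\sigma2\|(u,y_{\le p-1})-(\bar u,\bar y_{\le p-1})\|^2_{\widehat{\mathcal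 T}_{f_p}}+\tfrac\sigma2\|y_p-\bar y_p\|^2_{\mathcal T_{\theta_p}}.$$ Then $(u^+,y^+)$ is obtained exactly by $$u^+=\operatorname{argmin}_u\ \mathcal L_\sigma(u,\bar y,\bar v,\bar z;\bar x)+\langle\bar\delta_\theta,u\rangle+\tfrac\sigma2\|u-\bar u\|^2_{\mathcal T_f},$$ $$y_i^+=\operatorname{argmin}_{y_i}\ \mathcal L_\sigma(u^+,(y^+_{\le i-1},y_i,y'_{\ge i+1}),\bar v,\bar z;\bar x)+\tfrac\sigma2\|y_i-\bar y_i\|^2_{\mathcal T_{\theta_i}},\quad i=1,\dots,p,$$ and also, equivalently, by $$u^+=\operatorname{argmin}_u\ \mathcal L_\sigma(u,y',\bar v,\bar z;\bar x)+\tfrac\sigma2\|u-\bar u\|^2_{\mathcal T_f},$$ $$y_i^+=\operatorname{argmin}_{y_i}\ \mathcal L_\sigma(u^+,(y^+_{\le i-1},y_i,y'_{\ge i+1}),\bar v,\bar z;\bar x)+\tfrac\sigma2\|y_i-\bar y_i\|^2_{\mathcal T_{\theta_i}},\quad i=1,\dots,p.$$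
   Context: Let $p,q\ge1$ be integers and $\mathcal U,\mathcal V,\mathcal X,\mathcal Y_1,\dots,\mathcal Y_p,\mathcal Z_1,\dots,\mathcal Z_q$ real finite-dimensional Euclidean spaces, $\mathcal Y=\mathcal Y_1\times\dots\times\mathcal Y_p$, $\mathcal Z=\mathcal Z_1\times\dots\times\mathcal Z_q$. Let $f:\mathcal U\to(-\infty,+\infty]$, $g:\mathcal V\to(-\infty,+\infty]$ be closed proper convex; $\mathcal F:\mathcal X\to\mathcal U$, $\mathcal G:\mathcal X\to\mathcal V$, $\mathcal A_i:\mathcal X\to\mathcal Y_i$, $\mathcal B_j:\mathcal X\to\mathcal Z_j$ linear; $c\in\mathcal X$; $\theta_i(y_i)=\frac12\langle y_i,\mathcal P_iy_i\rangle-\langle b_i,y_i\rangle$, $\varphi_j(z_j)=\frac12\langle z_j,\mathcal Q_jz_j\rangle-\langle d_j,z_j\rangle$ with $\mathcal P_i,\mathcal Q_j$ self-adjoint positive semidefinite. Write $\mathcal A^*y=\sum_i\mathcal A_i^*y_i$, $\mathcal B^*z=\sum_j\mathcal B_j^*z_j$, $\Gamma(u,y,v,z):=\mathcal F^*u+\mathcal A^*y+\mathcal G^*v+\mathcal B^*z-c$, and for $\sigma>0$ $$\mathcal L_\sigma(u,y,v,z;x):=f(u)+\sum_i\theta_i(y_i)+g(v)+\sum_j\varphi_j(z_j)+\langle x,\Gamma(u,y,v,z)\rangle+\tfrac\sigma2\|\Gamma(u,y,v,z)\|^2.$$ For each $i$, $\mathcal E_{\theta_i}$ is a self-adjoint positive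 definite operator on $\mathcal Y_i$ with $\mathcal E_{\theta_i}\succeq\sigma^{-1}\mathcal P_i+\mathcal A_i\mathcal A_i^*$ and $\mathcal T_{\theta_i}:=\mathcal E_{\theta_i}-\sigma^{-1}\mathcal P_i-\mathcal A_i\mathcal A_i^*$. $\mathcal T_f$ is a self-adjoint positive semidefinite operator on $\mathcal U$. Notation: $y_{\le i}=(y_1,\dots,y_i)$, $y_{\ge i}=(y_i,\dots,y_p)$ (empty if out of range); $\|w\|^2_{\mathcal T}=\langle w,\mathcal Tw\rangle$. Let $\mathcal F_1:=\mathcal F$ and, for $i=1,\dots,p$, $\mathcal F_{i+1}:\mathcal X\to\mathcal U\times\mathcal Y_1\times\dots\times\mathcal Y_i$, $\mathcal F_{i+1}x=(\mathcal Fx,\mathcal A_1x,\dots,\mathcal A_ix)$. Define $\widehat{\mathcal T}_{f_1}:=\mathcal T_f+\mathcal F_1\mathcal A_1^*\mathcal E_{\theta_1}^{-1}\mathcal A_1\mathcal F_1^*$ and for $i=2,\dots,p$, $\widehat{\mathcal T}_{f_i}:=\mathrm{diag}(\widehat{\mathcal T}_{f_{i-1}},\mathcal T_{\theta_{i-1}})+\mathcal F_i\mathcal A_i^*\mathcal E_{\theta_i}^{-1}\mathcal A_i\mathcal F_i^*$ (an operator on $\mathcal U\times\mathcal Y_1\times\dots\times\mathcal Y_{i-1}$). *)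

(* Defs.v *)
From HB Require Import structures.
From mathcomp Require Import all_boot all_order all_algebra.
From mathcomp Require Import all_classical all_reals ereal topology normedtype sequences.
Set Implicit Arguments. Unset Strict Implicit. Unset Printing Implicit Defensive.
Import Order.TTheory GRing.Theory Num.Theory.
Import numFieldNormedType.Exports.
Local Open Scope ring_scope.

(* A real finite-dimensional Euclidean space of dimension n is
   represented by column vectors 'cV[R]_n with the standard inner product
   (every such space is isometric to one of these).  A linear map
   L : R^m -> R^n is an n x m matrix acting by  x |-> L *m x ; its adjoint
   is the transpose. *)

Section Basic.
Variable R : realType.

Definition ip {n} (a b : 'cV[R]_n) : R := (a^T *m b) 0 0.
Definition qn {n} (T : 'M[R]_n) (a : 'cV[R]_n) : R := ip a (T *m a).

Definition selfadjoint {n} (T : 'M[R]_n) : Prop := T^T = T.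
Definition psd {n} (T : 'M[R]_n) : Prop :=
  selfadjoint T /\ forall a : 'cV[R]_n, 0 <= qn T a.
Definition pd {n} (T : 'M[R]_n) : Prop :=
  selfadjoint T /\ forall a : 'cV[R]_n, a != 0 -> 0 < qn T a.

Definition proper_fun {n} (h : 'cV[R]_n -> \bar R) : Prop :=
  (forall x, h x != -oo%E) /\ (exists x, h x != +oo%E).
Definition convex_fun {n} (h : 'cV[R]_n -> \bar R) : Prop :=
  forall (x y : 'cV[R]_n) (t : R), 0 <= t <= 1 ->
    (h ((t *: x + (1 - t) *: y)%R) <= t%:E * h x + ((1 - t)%R)%:E * h y)%E.
(* closed = the epigraph {(x,a) | h x <= a} is a closed subset of R^n x R
   (stated sequentially; convergence of vectors is entrywise). *)
Definition closed_fun {n} (h : 'cV[R]_n -> \bar R) : Prop :=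
  forall (xs : nat -> 'cV[R]_n) (al : nat -> R) (x : 'cV[R]_n) (a : R),
    (forall k, (h (xs k) <= (al k)%:E)%E) ->
    (forall i j, ((fun k => xs k i j) @ \oo --> x i j)%classic) ->
    (al @ \oo --> a)%classic ->
    (h x <= a%:E)%E.

Definition is_argmin {T : Type} (phi : T -> \bar R) (x : T) : Prop :=
  forall y, (phi x <= phi y)%E.

End Basic.

Record data (R : realType) := Data {
  dU : nat; dV : nat; dX : nat;
  p : nat; q : nat;
  dY : 'I_p -> nat;            (* dim Y_(i+1), 0-based block index i *)
  dZ : 'I_q -> nat;
  f : 'cV[R]_dU -> \bar R;
  g : 'cV[R]_dV -> \bar R;
  Fo : 'M[R]_(dU, dX);
  Go : 'M[R]_(dV, dX);
  Ao : forall i, 'M[R]_(dY i, dX);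
  Bo : forall j, 'M[R]_(dZ j, dX);
  c : 'cV[R]_dX;
  Po : forall i, 'M[R]_(dY i);
  bv : forall i, 'cV[R]_(dY i);
  Qo : forall j, 'M[R]_(dZ j);
  dv : forall j, 'cV[R]_(dZ j);
  sigma : R;
  Eth : forall i, 'M[R]_(dY i);
  Tf : 'M[R]_dU }.
Arguments dY {R} d i.
Arguments dU {R} d.
Arguments dV {R} d.
Arguments dX {R} d.
Arguments p {R} d.
Arguments q {R} d.
Arguments f {R} d.
Arguments g {R} d.
Arguments Fo {R} d.
Arguments Go {R} d.
Arguments c {R} d.
Arguments sigma {R} d.
Arguments Tf {R} d.
Arguments dZ {R} d j.
Arguments Ao {R} d i.
Arguments Bo {R} d j.
Arguments Po {R} d i.
Arguments bv {R} d i.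
Arguments Qo {R} d j.
Arguments dv {R} d j.
Arguments Eth {R} d i.

Unset Implicit Arguments.
Section Setting.
Context {R : realType}.
Variable D : data R.

Local Notation p := (p D).
Local Notation q := (q D).

Definition Ysp := forall i : 'I_p, 'cV[R]_(dY D i).
Definition Zsp := forall j : 'I_q, 'cV[R]_(dZ D j).

Definition Gamma (u : 'cV[R]_(dU D)) (y : Ysp) (v : 'cV[R]_(dV D)) (z : Zsp)
  : 'cV[R]_(dX D) :=
  (Fo D)^T *m u + \sum_(i < p) (Ao D i)^T *m y i + (Go D)^T *m v
  + \sum_(j < q) (Bo D j)^T *m z j - c D.

Definition theta (i : 'I_p) (yi : 'cV[R]_(dY D i)) : R :=
  2^-1 * ip yi (Po D i *m yi) - ip (bv D i) yi.
Definition varphi (j : 'I_q) (zj : 'cV[R]_(dZ D j)) : R :=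
  2^-1 * ip zj (Qo D j *m zj) - ip (dv D j) zj.

Definition Lsig (u : 'cV[R]_(dU D)) (y : Ysp) (v : 'cV[R]_(dV D)) (z : Zsp)
  (x : 'cV[R]_(dX D)) : \bar R :=
  (f D u + (\sum_(i < p) theta i (y i))%:E + g D v
   + (\sum_(j < q) varphi j (z j) + ip x (Gamma u y v z)
      + sigma D / 2 * ip (Gamma u y v z) (Gamma u y v z))%:E)%E.

Definition Ttheta (i : 'I_p) : 'M[R]_(dY D i) :=
  Eth D i - ((sigma D)^-1 *: Po D i + Ao D i *m (Ao D i)^T).

Definition upd (y : Ysp) (i : 'I_p) (yi : 'cV[R]_(dY D i)) : Ysp :=
  fun k => match i =P k with
           | ReflectT e => castmx (congr1 (dY D) e, erefl 1%N) yi
           | ReflectF _ => y k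
           end.

(* (a_{<= i-1}, yi, b_{>= i+1}) , blocks numbered from 0 here *)
Definition blk (a b : Ysp) (i : 'I_p) (yi : 'cV[R]_(dY D i)) : Ysp :=
  upd (fun k => if (k < i)%N then a k else b k) i yi.

(* W := U x Y_1 x ... x Y_p ;  the space U x Y_1 x ... x Y_{i-1} is
   identified with the elements of W whose blocks Y_k, k >= i, are 0. *)
Definition W := ('cV[R]_(dU D) * Ysp)%type.
Definition addW (a b : W) : W := (a.1 + b.1, fun k : 'I_p => a.2 k + b.2 k).
Definition ipW (a b : W) : R := ip a.1 b.1 + \sum_(k < p) ip (a.2 k) (b.2 k).
(* keep U and the blocks Y_1 .. Y_{n-1} (0-based k with k+1 < n) *)
Definition truncW (n : nat) (w : W) : W :=
  (w.1, fun k : 'I_p => if (k.+1 < n)%N then w.2 k else 0).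

(* F_n^* w = F^* w_u + sum_{k=1}^{n-1} A_k^* w_k  (1-based n) *)
Definition Fstar (n : nat) (w : W) : 'cV[R]_(dX D) :=
  (Fo D)^T *m w.1 + \sum_(k < p | (k.+1 < n)%N) (Ao D k)^T *m w.2 k.
Definition Fmap (n : nat) (x : 'cV[R]_(dX D)) : W :=
  (Fo D *m x, fun k : 'I_p => if (k.+1 < n)%N then Ao D k *m x else 0).
(* F_n A_n^* E_theta_n^-1 A_n F_n^* w   (1-based n, 1 <= n <= p) *)
Definition corr (n : nat) (w : W) : W :=
  match (insub n.-1 : option 'I_p) with
  | Some i => Fmap n ((Ao D i)^T *m (invmx (Eth D i) *m (Ao D i *m Fstar n w)))
  | None => (0, fun _ : 'I_p => 0)
  end.

(* Hat m = hat T_{f_{m+1}} :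
   hat T_{f_1} = T_f + F_1 A_1^* E_1^-1 A_1 F_1^*,
   hat T_{f_i} = diag(hat T_{f_{i-1}}, T_theta_{i-1}) + F_i A_i^* E_i^-1 A_i F_i^*. *)
Fixpoint Hat (m : nat) (w : W) : W :=
  match m with
  | 0 => addW (Tf D *m w.1, fun _ : 'I_p => 0) (corr 1 w)
  | m'.+1 =>
      addW ((Hat m' w).1,
            fun k : 'I_p => if (k == m' :> nat) then Ttheta k *m w.2 k else (Hat m' w).2 k)
           (corr m.+1 w)
  end.

Section Beta.
Variables (xbar : 'cV[R]_(dX D)) (ybar : Ysp) (gam : 'cV[R]_(dX D)).
Definition sres (i : 'I_p) (s' : 'I_p -> 'cV[R]_(dX D)) : 'cV[R]_(dX D) :=
  (Ao D i)^T *m (invmx (Eth D i) *m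
     (bv D i - \sum_(k < p | (i < k)%N) (Ao D i *m s' k) - Ao D i *m xbar
      - Po D i *m ybar i + sigma D *: (Ao D i *m gam))).
(* backward recursion: sfun n computes the blocks k >= p - n *)
Fixpoint sfun (n : nat) : 'I_p -> 'cV[R]_(dX D) :=
  match n with
  | 0 => fun _ : 'I_p => 0
  | n'.+1 => let s' := sfun n' in
             fun i => if (i == (p - n'.+1)%N :> nat) then sres i s' else s' i
  end.
(* s i = A_i^* E_i^-1 ( ... ), so that beta-bar_{i,j} = A_{j-1} (s i), A_0 = F *)
Definition sbar : 'I_p -> 'cV[R]_(dX D) := sfun p.
Definition betaU (i : 'I_p) : 'cV[R]_(dU D) := Fo D *m sbar i.
(* beta-bar_{k,i+1}  (lies in Y_i) *)
Definition betaY (k i : 'I_p) : 'cV[R]_(dY D i) := Ao D i *m sbar k.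
Definition deltabar : 'cV[R]_(dU D) := \sum_(i < p) betaU i.
End Beta.

End Setting.

Definition last_block {p : nat} (hp : (0 < p)%N) : 'I_p :=
  Ordinal (etrans (ltn_predL p) hp).

(* Main.v *)
Require Import Defs.
From HB Require Import structures.
From mathcomp Require Import all_boot all_order all_algebra.
From mathcomp Require Import all_classical all_reals ereal topology normedtype sequences.
From mathcomp Require Import ring lra zify.
Import Order.TTheory GRing.Theory Num.Theory.
Import numFieldNormedType.Exports.
Local Open Scope ring_scope.

Section IP.
Context {R : realType}.

Lemma ipC n (a b : 'cV[R]_n) : ip a b = ip b a.
Proof. by rewrite /ip -[in RHS](trmxK (b^T *m a)) trmx_mul trmxK [in RHS]mxE. Qed.

Lemma ipDr n (a b c : 'cV[R]_n) : ip a (b + c) = ip a b + ip a c.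
Proof. by rewrite /ip mulmxDr mxE. Qed.
Lemma ipDl n (a b c : 'cV[R]_n) : ip (a + b) c = ip a c + ip b c.
Proof. by rewrite ipC ipDr !(ipC _ c). Qed.
Lemma ipZr n k (a b : 'cV[R]_n) : ip a (k *: b) = k * ip a b.
Proof. by rewrite /ip -scalemxAr mxE. Qed.
Lemma ipZl n k (a b : 'cV[R]_n) : ip (k *: a) b = k * ip a b.
Proof. by rewrite ipC ipZr ipC. Qed.
Lemma ipNr n (a b : 'cV[R]_n) : ip a (- b) = - ip a b.
Proof. by rewrite -scaleN1r ipZr mulN1r. Qed.
Lemma ipNl n (a b : 'cV[R]_n) : ip (- a) b = - ip a b.
Proof. by rewrite ipC ipNr ipC. Qed.
Lemma ipBr n (a b c : 'cV[R]_n) : ip a (b - c) = ip a b - ip a c.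
Proof. by rewrite ipDr ipNr. Qed.
Lemma ipBl n (a b c : 'cV[R]_n) : ip (a - b) c = ip a c - ip b c.
Proof. by rewrite ipDl ipNl. Qed.
Lemma ip0r n (a : 'cV[R]_n) : ip a 0 = 0.
Proof. by rewrite /ip mulmx0 mxE. Qed.
Lemma ip0l n (a : 'cV[R]_n) : ip 0 a = 0.
Proof. by rewrite ipC ip0r. Qed.
Lemma ip_sumr n (I : Type) (r : seq I) (P : pred I) (F : I -> 'cV[R]_n) a :
  ip a (\sum_(i <- r | P i) F i) = \sum_(i <- r | P i) ip a (F i).
Proof. by rewrite /ip mulmx_sumr summxE. Qed.
Lemma ip_suml n (I : Type) (r : seq I) (P : pred I) (F : I -> 'cV[R]_n) a :
  ip (\sum_(i <- r | P i) F i) a = \sum_(i <- r | P i) ip (F i) a.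
Proof. by rewrite ipC ip_sumr; apply: eq_bigr => i _; rewrite ipC. Qed.
Lemma ip_mul m n (M : 'M[R]_(m, n)) a b : ip a (M *m b) = ip (M^T *m a) b.
Proof. by rewrite /ip trmx_mul trmxK mulmxA. Qed.
Lemma ip_mulT m n (M : 'M[R]_(m, n)) a b : ip a (M^T *m b) = ip (M *m a) b.
Proof. by rewrite ip_mul trmxK. Qed.

Lemma ip_sym n (M : 'M[R]_n) a b : M^T = M -> ip a (M *m b) = ip (M *m a) b.
Proof. by move=> h; rewrite ip_mul h. Qed.

Lemma ipsq n (a b : 'cV[R]_n) : ip (a + b) (a + b) = ip a a + 2 * ip a b + ip b b.
Proof. rewrite !ipDl !ipDr (ipC _ b a); ring. Qed.

Lemma telesc m n (b : 'cV[R]_m) (a : 'I_n -> 'cV[R]_m) :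
  ip (b + \sum_i a i) (b + \sum_i a i) =
  ip b b + \sum_i (2 * ip (a i) (b + \sum_(k < n | (k < i)%N) a k) + ip (a i) (a i)).
Proof.
elim: n a => [|n IH] a; first by rewrite !big_ord0 !addr0.
rewrite !big_ord_recr /= addrA ipsq IH -!addrA; congr (_ + _); congr (_ + _).
  apply: eq_bigr => i _; congr (2 * ip _ (b + _) + _).
  rewrite big_mkcond [RHS]big_mkcond big_ord_recr /= ltnNge ltnW /= ?addr0 //.
congr (_ + _); rewrite ipC; congr (2 * ip _ _).
congr (_ + _); rewrite [RHS]big_mkcond big_ord_recr /= ltnn addr0.
by apply: eq_bigr => i _; rewrite ltn_ord.
Qed.

Lemma invmx_sym n (E : 'M[R]_n) a b : E^T = E ->
  ip (invmx E *m a) b = ip a (invmx E *m b).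
Proof. by move=> h; rewrite ip_mul trmx_inv h ipC. Qed.

Lemma blockE n m (E P : 'M[R]_n) (Am : 'M[R]_(n,m)) (d rho : 'cV[R]_n)
  (s : 'cV[R]_m) (sg : R) : E^T = E -> E \in unitmx -> sg != 0 ->
  sg / 2 * qn E (d - invmx E *m (sg^-1 *: rho - Am *m s)) =
  sg / 2 * (sg^-1 * ip d (P *m d) + ip (Am^T *m d) (Am^T *m d)
            + qn (E - (sg^-1 *: P + Am *m Am^T)) d)
  - ip rho d + sg * ip (Am^T *m d) s + (2 * sg)^-1 * ip (invmx E *m rho) rho
  - ip (Am^T *m (invmx E *m rho)) s + sg / 2 * ip (Am *m s) (invmx E *m (Am *m s)).
Proof.
move=> hs hu hsg.
have h1 : forall v, qn E (d - invmx E *m v) = qn E d - 2 * ip d v + ip (invmx E *m v) v.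
  move=> v; have Em : E *m (invmx E *m v) = v by rewrite mulKVmx.
  rewrite /qn mulmxBr Em !(ipBl, ipBr).
  have -> : ip (invmx E *m v) (E *m d) = ip d v by rewrite ip_sym // Em ipC.
  ring.
set v := sg^-1 *: rho - Am *m s.
have h2 : qn E d = sg^-1 * ip d (P *m d) + ip (Am^T *m d) (Am^T *m d)
            + qn (E - (sg^-1 *: P + Am *m Am^T)) d.
  rewrite /qn !(mulmxBl, mulmxDl, ipBr, ipDr) -scalemxAl ipZr -mulmxA (@ip_mul _ _ Am).
  ring.
have h3 : ip d v = sg^-1 * ip rho d - ip (Am^T *m d) s.
  by rewrite /v ipBr ipZr ipC ip_mul.
have h4 : ip (invmx E *m v) v = sg^-1 * sg^-1 * ip (invmx E *m rho) rho
   - 2 * sg^-1 * ip (Am^T *m (invmx E *m rho)) s + ip (Am *m s) (invmx E *m (Am *m s)).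
  rewrite /v mulmxBr -scalemxAr !(ipBl, ipBr, ipZl, ipZr).
  have k1 : ip (invmx E *m rho) (Am *m s) = ip (Am^T *m (invmx E *m rho)) s by rewrite ip_mul.
  have k2 : ip (invmx E *m (Am *m s)) rho = ip (Am^T *m (invmx E *m rho)) s.
    by rewrite invmx_sym // ipC ip_mul.
  have k3 : ip (invmx E *m (Am *m s)) (Am *m s) = ip (Am *m s) (invmx E *m (Am *m s)).
    by rewrite invmx_sym.
  rewrite k1 k2 k3; ring.
by rewrite h1 h2 h3 h4; field.
Qed.


End IP.

Section HatS.
Context {R : realType} (D : data R).
Local Notation p := (p D).

Lemma ipW_add (w a b : W D) : ipW D w (addW D a b) = ipW D w a + ipW D w b.
Proof.
rewrite /ipW /addW /= ipDr.
rewrite (eq_bigr (fun k => ip (w.2 k) (a.2 k) + ip (w.2 k) (b.2 k))); last by move=> k _; rewrite ipDr.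
rewrite big_split /=; ring.
Qed.

Lemma ipW_Fmap n (w : W D) x : ipW D w (Fmap D n x) = ip (Fstar D n w) x.
Proof.
rewrite /ipW /Fmap /Fstar /= ipDl ip_mul ip_suml; congr (_ + _).
rewrite [RHS]big_mkcond; apply: eq_bigr => k _ /=.
by case: ifP => _; rewrite ?ip0r // ip_mul.
Qed.

Lemma corr_hi n w (k : 'I_p) : (n <= k.+1)%N -> (corr D n w).2 k = 0.
Proof.
move=> h; rewrite /corr; case: insub => [i|] //=.
by rewrite ltnNge h.
Qed.

Lemma Hat_hi m w (k : 'I_p) : (m <= k)%N -> (Hat D m w).2 k = 0.
Proof.
elim: m => [|m IH] h /=.
  by rewrite corr_hi // addr0.
rewrite corr_hi // addr0.
have -> : (k == m :> nat) = false by apply/negbTE; rewrite neq_ltn orbC (leq_trans _ h).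
by rewrite IH // ltnW.
Qed.

Lemma corr_ipS (i : 'I_p) w :
  ipW D w (corr D i.+1 w) =
  ip (Ao D i *m Fstar D i.+1 w) (invmx (Eth D i) *m (Ao D i *m Fstar D i.+1 w)).
Proof. by rewrite /corr /= valK ipW_Fmap ip_mulT. Qed.

Lemma ipW_step m w : ipW D w ((Hat D m w).1,
   fun k : 'I_p => if (k == m :> nat) then Ttheta D k *m w.2 k else (Hat D m w).2 k)
  = ipW D w (Hat D m w) + \sum_(k < p) (if (k == m :> nat) then qn (Ttheta D k) (w.2 k) else 0).
Proof.
rewrite /ipW /= -addrA -big_split; congr (_ + _); apply: eq_bigr => k _ /=.
case: eqP => [e|_]; last by rewrite addr0.
by rewrite Hat_hi ?e // ip0r add0r.
Qed.

Lemma Hat_ip m (w : W D) : (m < p)%N ->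
  ipW D w (Hat D m w) = qn (Tf D) w.1
    + \sum_(k < p | (k < m)%N) qn (Ttheta D k) (w.2 k)
    + \sum_(0 <= n < m.+1) ipW D w (corr D n.+1 w).
Proof.
elim: m => [|m IH] hm /=.
  rewrite ipW_add big_nat1 big_pred0 // addr0; congr (_ + _).
  by rewrite /ipW /= big1 ?addr0 // => k _; rewrite ip0r.
have hm' : (m < p)%N by apply: ltnW.
rewrite ipW_add ipW_step IH // [\sum_(0 <= n < m.+2) _]big_nat_recr //=.
have -> : \sum_(k < p | (k < m.+1)%N) qn (Ttheta D k) (w.2 k) =
   \sum_(k < p | (k < m)%N) qn (Ttheta D k) (w.2 k) +
   \sum_(k < p) (if (k == m :> nat) then qn (Ttheta D k) (w.2 k) else 0).
  rewrite big_mkcond [X in _ = X + _]big_mkcond -big_split /=.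
  apply: eq_bigr => k _; rewrite ltnS leq_eqVlt; case: eqP => /= [e|_].
    by rewrite e ltnn add0r.
  exact: (esym (addr0 _)).
lra.
Qed.


Lemma upd_eq (y : Ysp D) i yi : upd D y i yi i = yi.
Proof.
rewrite /upd; case: eqP => // e.
by rewrite (eq_irrelevance e erefl) castmx_id.
Qed.

Lemma upd_neq (y : Ysp D) i yi k : k != i -> upd D y i yi k = y k.
Proof. by rewrite /upd eq_sym; case: eqP. Qed.

Lemma sum_upd (V : zmodType) (F : forall k : 'I_p, 'cV[R]_(dY D k) -> V) (y : Ysp D) i yi :
  \sum_k F k (upd D y i yi k) = F i yi + \sum_(k | k != i) F k (y k).
Proof.
rewrite (bigD1 i) //= upd_eq; congr (_ + _); apply: eq_bigr => k hk.
by rewrite upd_neq.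
Qed.

End HatS.

Section Gen.
Context {R : realType}.

Lemma qn0 n (E : 'M[R]_n) : qn E 0 = 0.
Proof. by rewrite /qn mulmx0 ip0r. Qed.

Lemma pd_ge0 n (E : 'M[R]_n) a : pd E -> 0 <= qn E a.
Proof.
case=> _ h; case: (eqVneq a 0) => [->|/h /ltW //]; by rewrite qn0.
Qed.

Lemma pd_eq0 n (E : 'M[R]_n) a : pd E -> qn E a <= 0 -> a = 0.
Proof.
case=> _ h ha; apply/eqP; apply: contraLR ha => /h.
by rewrite -ltNge.
Qed.

Lemma pd_unit n (E : 'M[R]_n) : pd E -> E \in unitmx.
Proof.
move=> hE; rewrite -row_free_unit; apply: inj_row_free => v hv.
have h0 : E *m v^T = 0 by rewrite -[E](proj1 hE) -trmx_mul hv trmx0.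
have : v^T = 0 by apply: (pd_eq0 _ _ _ hE); rewrite /qn h0 ip0r.
by move/(congr1 trmx); rewrite trmxK trmx0.
Qed.

Lemma argmin_quad n (E : 'M[R]_n) (phi : 'cV[R]_n -> \bar R) (e : \bar R) (c sg : R)
  (m0 : 'cV[R]_n) : e \is a fin_num -> pd E -> 0 < sg ->
  (forall x, phi x = (e + (c + sg / 2 * qn E (x - m0))%:E)%E) ->
  forall x, is_argmin phi x <-> x = m0.
Proof.
move=> he hE hsg hphi x; rewrite -(fineK he) in hphi.
split => [h|->].
  have := h m0; rewrite !hphi subrr qn0 mulr0 addr0 -!EFinD lee_fin => hle.
  have : qn E (x - m0) <= 0.
    have : sg / 2 * qn E (x - m0) <= 0 by lra.
    by rewrite pmulr_rle0 // divr_gt0.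
  by move/(pd_eq0 _ _ _ hE)/eqP; rewrite subr_eq0 => /eqP.
move=> y; rewrite !hphi subrr qn0 mulr0 addr0 -!EFinD lee_fin lerD2l lerDl.
by rewrite mulr_ge0 ?pd_ge0 // divr_ge0 // ltW.
Qed.

Lemma argmin_ext {T : Type} (phi psi : T -> \bar R) x :
  (forall u, phi u = psi u) -> is_argmin phi x <-> is_argmin psi x.
Proof. by move=> h; rewrite /is_argmin; split => H y; [rewrite -!h | rewrite !h]; exact: H. Qed.

Local Open Scope ereal_scope.

Lemma shift_argmin {U : Type} (e : U -> \bar R) (phi : U -> R) (K : R) up :
  is_argmin (fun u => e u + (phi u + K)%:E) up <-> is_argmin (fun u => e u + (phi u)%:E) up.
Proof.
have key : forall a b : \bar R, (a + K%:E <= b + K%:E) = (a <= b).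
  move=> a b; case: a => [a| |]; case: b => [b| |];
    rewrite ?addNye ?addye // -?EFinD ?lee_fin ?lerD2r ?leey ?leNye //.
rewrite /is_argmin; split => h u; have := h u;
  by rewrite !EFinD !addeA key.
Qed.

Lemma final_abs {U Y : Type} (e : U -> \bar R) (phi : U -> R) (S : U -> Y -> R) (K : R)
  (J : U * Y -> \bar R) (steps : Prop) up yp :
  (forall u, e u != -oo) -> (exists u0, e u0 != +oo) ->
  (forall u y, J (u, y) = e u + (phi u + S u y + K)%:E) ->
  (forall u y, (0 <= S u y)%R) -> (forall u, exists y, S u y = 0%R) ->
  (e up \is a fin_num -> (steps <-> S up yp = 0%R)) ->
  (is_argmin J (up, yp) <-> is_argmin (fun u => e u + (phi u)%:E) up /\ steps).
Proof.
move=> eN [u0 hu0] hJ S0 Sex hst.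
have fin_of : forall u, e u != +oo -> e u \is a fin_num.
  by move=> u h; rewrite fin_numE h eN.
split => [h|[h st]].
  have fup : e up \is a fin_num.
    apply: fin_of; apply: contra hu0 => /eqP hup.
    have [y0 hy0] := Sex u0; have := h (u0, y0); rewrite !hJ hup hy0.
    by case: (e u0) (eN u0) => //.
  move: (fup); rewrite -(fineK fup) => _.
  set r := fine (e up).
  have hS : S up yp = 0%R.
    have [y1 hy1] := Sex up; have := h (up, y1); rewrite !hJ -(fineK fup) -/r hy1.
    rewrite -!EFinD lee_fin addr0 => hle; apply/eqP; rewrite eq_le S0 andbT; lra.
  split; last by rewrite hst.
  move=> u; have [yu hyu] := Sex u; have := h (u, yu); rewrite !hJ hyu hS -(fineK fup) -/r.
  case: (e u) (eN u) => [s _|_ _|//]; last by rewrite addye ?leey.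
  rewrite -!EFinD !lee_fin !addr0 => hle; lra.
have fup : e up \is a fin_num.
  apply: fin_of; apply: contra hu0 => /eqP hup.
  by have := h u0; rewrite hup; case: (e u0) (eN u0).
have hS : S up yp = 0%R by rewrite -hst.
move=> [u y]; have := h u; rewrite !hJ hS -(fineK fup).
case: (e u) (eN u) => [s _|_ _|//]; last by rewrite addye ?leey.
rewrite -!EFinD !lee_fin => hle; have := S0 u y; lra.
Qed.

End Gen.

Lemma zm5 (V : zmodType) (a b c d e x y : V) :
  (a + x) + (b + y) + c + d - e = a + b + c + d - e + (x + y).
Proof. by rewrite !(addrAC _ x) (addrA a b y) !(addrAC _ y) addrA. Qed.

Lemma addsub (V : zmodType) (a b : V) : a = b + (a - b).
Proof. by rewrite addrC subrK. Qed.

Lemma quad_i {R : realType} n m (P : 'M[R]_n) (A : 'M[R]_(n,m)) (yb d b : 'cV[R]_n)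
  (x s g : 'cV[R]_m) (sg : R) : P^T = P ->
 (2^-1 * ip (yb + d) (P *m (yb + d)) - ip b (yb + d)) - (2^-1 * ip yb (P *m yb) - ip b yb)
  + ip x (A^T *m d) + sg/2 * (2 * ip (A^T *m d) (- g + s) + ip (A^T *m d) (A^T *m d))
 = 2^-1 * ip d (P *m d) - ip (b - A *m x - P *m yb + sg *: (A *m g)) d
   + sg * ip (A^T *m d) s + sg/2 * ip (A^T *m d) (A^T *m d).
Proof.
move=> hP.
have e1 : ip yb (P *m d) = ip (P *m yb) d by rewrite ip_sym.
have e2 : ip d (P *m yb) = ip (P *m yb) d by rewrite ipC.
have e3 : ip x (A^T *m d) = ip (A *m x) d by rewrite ip_mulT.
have e4 : ip (A^T *m d) g = ip (A *m g) d by rewrite ipC ip_mulT.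
rewrite !(mulmxDr, ipDl, ipDr, ipNr, ipNl, ipBl, ipBr, ipZl, ipZr).
rewrite e1 e2 e3 e4; lra.
Qed.

Lemma stepE {R : realType} n m (E P : 'M[R]_n) (Am : 'M[R]_(n,m)) (yb d b : 'cV[R]_n)
  (x G : 'cV[R]_m) (sg : R) : P^T = P -> E^T = E -> E \in unitmx -> sg != 0 ->
 (2^-1 * ip (yb + d) (P *m (yb + d)) - ip b (yb + d)) - (2^-1 * ip yb (P *m yb) - ip b yb)
 + ip x (Am^T *m d) + sg / 2 * (ip (G + Am^T *m d) (G + Am^T *m d) - ip G G)
 + sg / 2 * qn (E - (sg^-1 *: P + Am *m Am^T)) d
 = sg / 2 * qn E (d - invmx E *m (sg^-1 *: (b - Am *m x - P *m yb) - Am *m G))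
   - sg / 2 * qn E (invmx E *m (sg^-1 *: (b - Am *m x - P *m yb) - Am *m G)).
Proof.
move=> hP hs hu hsg.
have h1 : forall v, qn E (d - invmx E *m v) = qn E d - 2 * ip d v + qn E (invmx E *m v).
  move=> v; have Em : E *m (invmx E *m v) = v by rewrite mulKVmx.
  rewrite /qn mulmxBr Em !(ipBl, ipBr).
  have -> : ip (invmx E *m v) (E *m d) = ip d v by rewrite ip_sym // Em ipC.
  ring.
rewrite h1.
have h2 : qn (E - (sg^-1 *: P + Am *m Am^T)) d =
   qn E d - sg^-1 * ip d (P *m d) - ip (Am^T *m d) (Am^T *m d).
  rewrite /qn !(mulmxBl, mulmxDl, ipBr, ipDr) -scalemxAl ipZr -mulmxA (@ip_mul _ _ _ Am).
  ring.
have h3 : ip d (sg^-1 *: (b - Am *m x - P *m yb) - Am *m G) =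
   sg^-1 * (ip b d - ip (Am *m x) d - ip (P *m yb) d) - ip (Am^T *m d) G.
  rewrite !(ipBr, ipZr) (ipC _ d b) (ipC _ d (Am *m x)) (ipC _ d (P *m yb)).
  by rewrite (@ip_mul _ _ _ Am d G).
have e1 : ip yb (P *m d) = ip (P *m yb) d by rewrite ip_sym.
have e2 : ip d (P *m yb) = ip (P *m yb) d by rewrite ipC.
have e3 : ip x (Am^T *m d) = ip (Am *m x) d by rewrite ip_mulT.
have e4 : ip G (Am^T *m d) = ip (Am^T *m d) G by rewrite ipC.
rewrite h2 h3.
rewrite !(mulmxDr, ipDl, ipDr) e1 e2 e3 e4.
by field.
Qed.

Lemma zmA (V : zmodType) (a c f z w : V) :
  a - (- c + (f + (z + w))) = a + c - w - (f + z).
Proof.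
by rewrite !opprD opprK !addrA (addrAC _ (- z) (- w)) (addrAC _ (- f) (- w)).
Qed.

Section Setup.
Context {R : realType} (D : data R).
Local Notation p := (p D).
Local Notation sg := (sigma D).
Context (ubar : 'cV[R]_(dU D)) (ybar : Ysp D) (vbar : 'cV[R]_(dV D)) (zbar : Zsp D)
  (xbar : 'cV[R]_(dX D)).

Definition gr : R := fine (g D vbar).
Definition Lr (u : 'cV[R]_(dU D)) (y : Ysp D) : R :=
  \sum_(i < p) theta D i (y i) + (gr + (\sum_(j < q D) varphi D j (zbar j)
   + ip xbar (Gamma D u y vbar zbar)
   + sg / 2 * ip (Gamma D u y vbar zbar) (Gamma D u y vbar zbar))).

Lemma Lsig_r (hg : g D vbar \is a fin_num) u y :
  Lsig D u y vbar zbar xbar = (f D u + (Lr u y)%:E)%E.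
Proof.
rewrite /Lsig /Lr -(fineK hg) -/gr -!addeA -!EFinD //.
Qed.

Definition du (u : 'cV[R]_(dU D)) := u - ubar.
Definition dy (y : Ysp D) (i : 'I_p) := y i - ybar i.
Definition aY (y : Ysp D) (i : 'I_p) : 'cV[R]_(dX D) := (Ao D i)^T *m dy y i.
Definition sS u y (i : 'I_p) : 'cV[R]_(dX D) :=
  (Fo D)^T *m du u + \sum_(k < p | (k < i)%N) aY y k.
Definition gam := - Gamma D ubar ybar vbar zbar.

Lemma Gamma_exp u y :
  Gamma D u y vbar zbar = - gam + ((Fo D)^T *m du u + \sum_i aY y i).
Proof.
rewrite /gam opprK /Gamma /aY /du /dy.
rewrite [in LHS](addsub _ u ubar) [in LHS](addsub _ (\sum_(i < p) (Ao D i)^T *m y i) (\sum_(i < p) (Ao D i)^T *m ybar i)).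
rewrite mulmxDr zm5; congr (_ + (_ + _)).
by rewrite -sumrB; apply: eq_bigr => i _; rewrite mulmxBr.
Qed.


Context (hPs : forall i, (Po D i)^T = Po D i).

Definition rr (i : 'I_p) : 'cV[R]_(dY D i) :=
  bv D i - Ao D i *m xbar - Po D i *m ybar i + sg *: (Ao D i *m gam).

Lemma aY_bar i : aY ybar i = 0.
Proof. by rewrite /aY /dy subrr mulmx0. Qed.

Lemma Lr_exp u y : Lr u y = Lr u ybar +
  \sum_i (2^-1 * ip (dy y i) (Po D i *m dy y i) - ip (rr i) (dy y i)
          + sg * ip (aY y i) (sS u y i) + sg / 2 * ip (aY y i) (aY y i)).
Proof.
rewrite /Lr !Gamma_exp (eq_bigr (fun=> 0) (fun i _ => aY_bar i)) big1_eq addr0.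
rewrite !addrA; set c0 := - gam + (Fo D)^T *m du u.
rewrite telesc ipDr ip_sumr.
have -> : \sum_(i < p) theta D i (y i) = \sum_(i < p) theta D i (ybar i)
   + \sum_(i < p) (theta D i (y i) - theta D i (ybar i)).
  by rewrite -big_split; apply: eq_bigr => i _; rewrite [RHS]addrC subrK.
have -> : \sum_i (2^-1 * ip (dy y i) (Po D i *m dy y i) - ip (rr i) (dy y i)
          + sg * ip (aY y i) (sS u y i) + sg / 2 * ip (aY y i) (aY y i)) =
  \sum_i (theta D i (y i) - theta D i (ybar i)) + \sum_i ip xbar (aY y i)
  + sg / 2 * \sum_i (2 * ip (aY y i) (c0 + \sum_(k < p | (k < i)%N) aY y k)
      + ip (aY y i) (aY y i)).
  rewrite mulr_sumr -!big_split; apply: eq_bigr => i _ /=.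
  rewrite /c0 -[- gam + _ + _]addrA -/(sS u y i) (addsub _ (y i) (ybar i)) -/(dy y i) /aY /theta /rr.
  by rewrite quad_i.
lra.
Qed.


Context (hp : (0 < p)%N) (hEs : forall i, (Eth D i)^T = Eth D i)
  (hEu : forall i, Eth D i \in unitmx) (hsg : 0 < sg).

Definition Dw u (y : Ysp D) : W D := truncW D p (du u, fun k => y k - ybar k).

Lemma Fstar_D u y (i : 'I_p) : Fstar D i.+1 (Dw u y) = sS u y i.
Proof.
rewrite /Fstar /Dw /truncW /sS /=; congr (_ + _).
apply: eq_big => [k|k hk]; first by rewrite ltnS.
by rewrite ifT // (leq_ltn_trans _ (ltn_ord i)) // -ltnS.
Qed.

Lemma Hat_exp u y : ipW D (Dw u y) (Hat D p.-1 (Dw u y)) =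
  qn (Tf D) (du u) + \sum_(k < p | (k < p.-1)%N) qn (Ttheta D k) (dy y k)
  + \sum_(i < p) ip (Ao D i *m sS u y i) (invmx (Eth D i) *m (Ao D i *m sS u y i)).
Proof.
rewrite Hat_ip ?ltn_predL // prednK //; congr (_ + _ + _).
  by apply: eq_bigr => k hk /=; rewrite ifT // -ltn_predRL.
by rewrite big_mkord; apply: eq_bigr => i _; rewrite corr_ipS Fstar_D.
Qed.

Local Notation Sb := (sbar D xbar ybar gam).
Local Notation sres := (sres D xbar ybar gam).
Local Notation sfun := (sfun D xbar ybar gam).

Lemma sres_ext (i : 'I_p) (s s' : 'I_p -> 'cV[R]_(dX D)) : (forall k : 'I_p, (i < k)%N -> s k = s' k) -> sres i s = sres i s'.
Proof.
move=> h; rewrite /Defs.sres (eq_bigr (fun k => Ao D i *m s' k)) // => k hk.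
by rewrite h.
Qed.

Lemma sfun_fix n (i : 'I_p) : (n <= p)%N -> (p - n <= i)%N -> sfun n i = sres i (sfun n).
Proof.
elim: n i => [|n IH] i hn hi.
  by move: (ltn_ord i) hi; lia.
rewrite /=; case: eqP => [e|ne].
  apply: sres_ext => k hk /=; rewrite ifF //; apply/eqP => e'.
  by move: hk e e'; lia.
rewrite IH ?(ltnW hn) //; last first.
  by move: hi ne; rewrite leq_eqVlt eq_sym => /orP [/eqP -> //|]; rewrite subnS; lia.
apply: sres_ext => k hk /=; rewrite ifF //; apply/eqP => e'.
by move: hi hk ne; rewrite e'; lia.
Qed.

Lemma Sb_fix i : Sb i = sres i Sb.
Proof. by rewrite /sbar sfun_fix // subnn. Qed.


Definition rho (i : 'I_p) : 'cV[R]_(dY D i) :=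
  rr i - \sum_(k < p | (i < k)%N) (Ao D i *m Sb k).

Lemma Sb_rho i : Sb i = (Ao D i)^T *m (invmx (Eth D i) *m rho i).
Proof.
rewrite Sb_fix /Defs.sres /rho /rr; congr (_ *m (_ *m _)).
set S := \sum_(k < p | (i < k)%N) _.
by rewrite 3!(addrAC _ (- S)).
Qed.

Definition mm u y (i : 'I_p) : 'cV[R]_(dY D i) :=
  invmx (Eth D i) *m (sg^-1 *: rho i - Ao D i *m sS u y i).
Definition Ssum u y : R := \sum_i sg / 2 * qn (Eth D i) (dy y i - mm u y i).

Lemma Ssum_exp u y : Ssum u y = \sum_i (
  sg / 2 * (sg^-1 * ip (dy y i) (Po D i *m dy y i) + ip (aY y i) (aY y i)
            + qn (Ttheta D i) (dy y i))
  - ip (rho i) (dy y i) + sg * ip (aY y i) (sS u y i)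
  + (2 * sg)^-1 * ip (invmx (Eth D i) *m rho i) (rho i)
  - ip (Sb i) (sS u y i)
  + sg / 2 * ip (Ao D i *m sS u y i) (invmx (Eth D i) *m (Ao D i *m sS u y i))).
Proof.
apply: eq_bigr => i _; rewrite /mm /aY /Ttheta (@blockE _ _ _ _ (Po D i)) ?Sb_rho //; last by rewrite gt_eqF.
Qed.

Lemma cross1 y : \sum_(i < p) ip (rho i) (dy y i) =
  \sum_(i < p) ip (rr i) (dy y i) - \sum_(i < p) \sum_(k < p | (i < k)%N) ip (aY y i) (Sb k).
Proof.
rewrite -sumrB; apply: eq_bigr => i _.
rewrite /rho ipBl ip_suml; congr (_ - _); apply: eq_bigr => k _.
by rewrite ipC ip_mul.
Qed.

Lemma cross2 u y : \sum_(i < p) ip (Sb i) (sS u y i) =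
  ip (deltabar D xbar ybar gam) (du u)
  + \sum_(i < p) \sum_(k < p | (i < k)%N) ip (aY y i) (Sb k).
Proof.
rewrite /sS; under eq_bigr do rewrite ipDr ip_sumr.
rewrite big_split /=; congr (_ + _).
  by rewrite /deltabar /betaU ip_suml; apply: eq_bigr => i _; rewrite ip_mulT.
rewrite (eq_bigr (fun i : 'I_p => \sum_(k < p) if (k < i)%N then ip (Sb i) (aY y k) else 0)); last first.
  by move=> i _; rewrite big_mkcond.
rewrite exchange_big /=; apply: eq_bigr => i _; rewrite [RHS]big_mkcond.
by apply: eq_bigr => k _; case: ifP => _ //; rewrite ipC.
Qed.


Definition delta := deltabar D xbar ybar gam.
Definition Jr u y := Lr u y + (sg / 2 * ipW D (Dw u y) (Hat D p.-1 (Dw u y))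
   + sg / 2 * qn (Ttheta D (last_block hp)) (dy y (last_block hp))).
Definition Phr u := Lr u ybar + (ip delta u + sg / 2 * qn (Tf D) (du u)).
Definition Cst := - ip delta ubar
   - \sum_(i < p) (2 * sg)^-1 * ip (invmx (Eth D i) *m rho i) (rho i).

Lemma Tsplit (F : 'I_p -> R) :
  \sum_(k < p) F k = \sum_(k < p | (k < p.-1)%N) F k + F (last_block hp).
Proof.
rewrite (bigD1 (last_block hp)) //= addrC; congr (_ + _); apply: eq_bigl => k.
apply/idP/idP => [h|]; last first.
  by apply: contraTN => /eqP ->; rewrite /= ltnn.
apply: contraNT h; rewrite -leqNgt => h; apply/eqP; apply: val_inj => /=.
by move: (ltn_ord k) h; lia.
Qed.

Lemma main_id u y : Jr u y = Phr u + Ssum u y + Cst.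
Proof.
rewrite /Jr /Phr /Cst Lr_exp Hat_exp Ssum_exp.
set SP := \sum_(i < p) ip (dy y i) (Po D i *m dy y i).
set SR := \sum_(i < p) ip (rr i) (dy y i).
set SAS := \sum_(i < p) ip (aY y i) (sS u y i).
set SAA := \sum_(i < p) ip (aY y i) (aY y i).
set ST := \sum_(i < p) qn (Ttheta D i) (dy y i).
set SRHO := \sum_(i < p) ip (rho i) (dy y i).
set SC := \sum_(i < p) ip (invmx (Eth D i) *m rho i) (rho i).
set SSS := \sum_(i < p) ip (Sb i) (sS u y i).
set SK := \sum_(i < p) ip (Ao D i *m sS u y i) (invmx (Eth D i) *m (Ao D i *m sS u y i)).
set ST' := \sum_(k < p | (k < p.-1)%N) qn (Ttheta D k) (dy y k).
have eT : ST = ST' + qn (Ttheta D (last_block hp)) (dy y (last_block hp)) by rewrite /ST Tsplit.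
have eR : SRHO = SR - \sum_(i < p) \sum_(k < p | (i < k)%N) ip (aY y i) (Sb k) by rewrite /SRHO cross1.
have eS : SSS = ip delta (du u) + \sum_(i < p) \sum_(k < p | (i < k)%N) ip (aY y i) (Sb k)
  by rewrite /SSS cross2.
have eC : \sum_(i < p) (2 * sg)^-1 * ip (invmx (Eth D i) *m rho i) (rho i) = (2 * sg)^-1 * SC
  by rewrite /SC mulr_sumr.
have eL : \sum_i (2^-1 * ip (dy y i) (Po D i *m dy y i) - ip (rr i) (dy y i)
          + sg * ip (aY y i) (sS u y i) + sg / 2 * ip (aY y i) (aY y i))
   = 2^-1 * SP - SR + sg * SAS + sg / 2 * SAA.
  by rewrite /SP /SR /SAS /SAA !mulr_sumr -!sumrN -!big_split.
have eQ : \sum_i (sg / 2 * (sg^-1 * ip (dy y i) (Po D i *m dy y i) + ip (aY y i) (aY y i)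
            + qn (Ttheta D i) (dy y i))
  - ip (rho i) (dy y i) + sg * ip (aY y i) (sS u y i)
  + (2 * sg)^-1 * ip (invmx (Eth D i) *m rho i) (rho i)
  - ip (Sb i) (sS u y i)
  + sg / 2 * ip (Ao D i *m sS u y i) (invmx (Eth D i) *m (Ao D i *m sS u y i)))
  = sg / 2 * (sg^-1 * SP + SAA + ST) - SRHO + sg * SAS + (2 * sg)^-1 * SC - SSS + sg / 2 * SK.
  rewrite /SP /SAA /ST /SRHO /SAS /SC /SSS /SK !mulrDr !mulr_sumr -!sumrN -!big_split /=.
  apply: eq_bigr => i _; ring.
have eD : ip delta u = ip delta (du u) + ip delta ubar by rewrite /du ipBr subrK.
rewrite eL eQ eC eD eR eS eT.
set X := \sum_(i < p) \sum_(k < p | (i < k)%N) _.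
have hs : sg != 0 by rewrite gt_eqF.
by field.
Qed.

Definition tt u (y : Ysp D) i : 'cV[R]_(dY D i) := invmx (Eth D i) *m
  (sg^-1 *: (bv D i - Ao D i *m xbar - Po D i *m ybar i)
   - Ao D i *m Gamma D u (upd D y i (ybar i)) vbar zbar).

Lemma Lr_step u (y : Ysp D) i yi :
  Lr u (upd D y i yi) + sg / 2 * qn (Ttheta D i) (yi - ybar i) =
  Lr u (upd D y i (ybar i)) + (sg / 2 * qn (Eth D i) (yi - ybar i - tt u y i)
     - sg / 2 * qn (Eth D i) (tt u y i)).
Proof.
set G := Gamma D u (upd D y i (ybar i)) vbar zbar.
set d := yi - ybar i.
have hG : Gamma D u (upd D y i yi) vbar zbar = G + (Ao D i)^T *m d.
  rewrite /G /Gamma !(sum_upd D _ (fun k (v : 'cV[R]_(dY D k)) => (Ao D k)^T *m v)).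
  have -> : (Ao D i)^T *m yi = (Ao D i)^T *m ybar i + (Ao D i)^T *m d.
    by rewrite /d mulmxBr addrC subrK.
  set S := \sum_(k | k != i) _.
  by rewrite (addrAC _ _ S) !addrA !(addrAC _ ((Ao D i)^T *m d)).
have hT : \sum_k theta D k (upd D y i yi k) = theta D i (ybar i + d) + \sum_(k | k != i) theta D k (y k).
  by rewrite (sum_upd D _ (fun k v => theta D k v)) /d [ybar i + _]addrC subrK.
have hT' : \sum_k theta D k (upd D y i (ybar i) k) = theta D i (ybar i) + \sum_(k | k != i) theta D k (y k).
  by rewrite (sum_upd D _ (fun k v => theta D k v)).
have key := @stepE _ _ _ (Eth D i) (Po D i) (Ao D i) (ybar i) d (bv D i) xbar G sg (hPs i) (hEs i) (hEu i) (lt0r_neq0 hsg).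
rewrite /Lr hG hT hT' (ipDr _ xbar) /Ttheta /tt -/G.
move: key; rewrite /theta.
set Q := ip (ybar i + d) _.
lra.
Qed.

Definition mix (a b : Ysp D) (i : 'I_p) : Ysp D := fun k => if (k < i)%N then a k else b k.

Lemma Gamma_mix u a b i :
  Gamma D u (upd D (mix a b i) i (ybar i)) vbar zbar = - gam +
  ((Fo D)^T *m du u + (\sum_(k < p | (k < i)%N) aY a k + \sum_(k < p | (i < k)%N) aY b k)).
Proof.
rewrite Gamma_exp; congr (_ + (_ + _)).
rewrite !(big_mkcond (fun k : 'I_p => (k < i)%N)) !(big_mkcond (fun k : 'I_p => (i < k)%N)) -big_split.
apply: eq_bigr => k _ /=; case: (eqVneq k i) => [->|ne].
  by rewrite ltnn /aY /dy upd_eq subrr mulmx0 addr0.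
rewrite /aY /dy upd_neq // /mix; case: ltngtP => h.
- by rewrite addr0.
- by rewrite add0r.
- exfalso; move/negP: ne; apply; apply/eqP/val_inj; first [exact: h | exact: (esym h)].
Qed.

Lemma tt_mm (y' a : Ysp D) u (i : 'I_p) : (forall k : 'I_p, (i < k)%N -> sg *: aY y' k = Sb k) ->
  tt u (mix a y' i) i = mm u a i.
Proof.
move=> key; rewrite /tt /mm Gamma_mix; congr (_ *m _).
have hs : sg != 0 by rewrite lt0r_neq0.
have eS : \sum_(k < p | (i < k)%N) Ao D i *m Sb k = sg *: (Ao D i *m \sum_(k < p | (i < k)%N) aY y' k).
  rewrite mulmx_sumr scaler_sumr; apply: eq_bigr => k hk.
  rewrite -(key k hk); first [by rewrite scalemxAr | by rewrite -scalemxAr | by rewrite linearZ | by rewrite mulmxZ | idtac "FAIL"].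
rewrite /rho /rr eS /sS mulmxDr !(mulmxN, mulmxDr, mulmx_sumr, scalerDr, scalerN, scalerA) mulVf // !scale1r.
by rewrite zmA.
Qed.

Context (hEpd : forall i, pd (Eth D i)) (hgf : g D vbar \is a fin_num).

Lemma Ssum_ge0 u y : 0 <= Ssum u y.
Proof.
apply: sumr_ge0 => i _; apply: mulr_ge0; first by rewrite divr_ge0 // ltW.
exact: pd_ge0.
Qed.

Lemma Ssum_eq0 u y : Ssum u y = 0 <-> forall i, dy y i = mm u y i.
Proof.
split => [h i|h]; last first.
  by rewrite /Ssum big1 // => i _; rewrite h subrr qn0 mulr0.
have /eqP := h; rewrite psumr_eq0; last first.
  move=> j _; apply: mulr_ge0; first by rewrite divr_ge0 // ltW.
  exact: pd_ge0.
move=> /allP /(_ i (mem_index_enum _)) /implyP /(_ isT) /eqP.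
move/eqP; rewrite mulf_eq0 => /orP [|/eqP hq].
  have hs2 : sg / 2 != 0 by apply: lt0r_neq0; rewrite divr_gt0.
  by rewrite (negbTE hs2).
by apply/eqP; rewrite -subr_eq0; apply/eqP; apply: (pd_eq0 _ _ _ (hEpd i)); rewrite hq.
Qed.

Lemma mm_ext u (y y2 : Ysp D) (i : 'I_p) : (forall k : 'I_p, (k < i)%N -> y k = y2 k) -> mm u y i = mm u y2 i.
Proof.
move=> h; rewrite /mm /sS (eq_bigr (fun k => aY y2 k)) // => k hk.
by rewrite /aY /dy h.
Qed.

Fixpoint yfun u n : Ysp D := match n with
  | 0 => ybar
  | n'.+1 => match (insub n' : option 'I_p) with
             | Some i => upd D (yfun u n') i (ybar i + mm u (yfun u n') i)
             | None => yfun u n' end end.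

Lemma yfun_sol u n : (n <= p)%N -> forall i : 'I_p, (i < n)%N ->
  yfun u n i = ybar i + mm u (yfun u n) i.
Proof.
elim: n => [|n IH] hn i hi //=.
case: insubP => [j _ ej|]; last by rewrite hn.
have hne : forall k : 'I_p, (k < j)%N -> k != j.
  by move=> k hk; apply: contraTN hk => /eqP ->; rewrite ltnn.
case: (eqVneq i j) => [->|ne].
  rewrite upd_eq; congr (_ + _); apply: mm_ext => k hk.
  by rewrite upd_neq // hne.
rewrite upd_neq // IH ?(ltnW hn) //; last first.
  by move: hi ne; rewrite ltnS leq_eqVlt -ej => /orP [/eqP/val_inj ->|//]; rewrite eqxx.
congr (_ + _); apply: mm_ext => k hk; rewrite upd_neq //.
apply: contraTneq hk => ->; rewrite -leqNgt ej.
by move: hi ne; rewrite ltnS leq_eqVlt -ej => /orP [/eqP/val_inj ->|/ltnW //]; rewrite eqxx.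
Qed.

Lemma Ssum_ex u : exists y, Ssum u y = 0.
Proof.
exists (yfun u p); apply/Ssum_eq0 => i.
by rewrite /dy yfun_sol // [ybar i + _]addrC addrK.
Qed.

Lemma step_char (a b : Ysp D) u i x : f D u \is a fin_num ->
  is_argmin (fun yi => (Lsig D u (blk D a b i yi) vbar zbar xbar
     + (sg / 2 * qn (Ttheta D i) (yi - ybar i))%:E)%E) x <->
  x = ybar i + tt u (mix a b i) i.
Proof.
move=> hf; apply: (@argmin_quad _ _ (Eth D i) _ (f D u) (Lr u (upd D (mix a b i) i (ybar i))
   - sg / 2 * qn (Eth D i) (tt u (mix a b i) i)) sg) => // yi.
rewrite (Lsig_r hgf) -addeA -EFinD.
change (upd D (fun k => if (k < i)%N then a k else b k) i yi) with (upd D (mix a b i) i yi).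
rewrite Lr_step (opprD (ybar i)) (addrA yi) -/(mix a b i); congr (_ + _)%E; congr (_%:E); lra.
Qed.

Lemma back_key (y' : Ysp D) : f D ubar \is a fin_num ->
  (forall i, is_argmin (fun yi => (Lsig D ubar (blk D ybar y' i yi) vbar zbar xbar
     + (sg / 2 * qn (Ttheta D i) (yi - ybar i))%:E)%E) (y' i)) ->
  forall k, sg *: aY y' k = Sb k.
Proof.
move=> hf hy.
have main : forall n (k : 'I_p), (p <= k + n)%N -> sg *: aY y' k = Sb k.
  elim => [|n IH] k hk; first by move: (ltn_ord k) hk; rewrite addn0; lia.
  have e := (step_char _ _ _ _ _ hf).1 (hy k).
  rewrite tt_mm in e; last by move=> j hj; apply: IH; lia.
  have hs : sg != 0 by rewrite lt0r_neq0.
  rewrite /aY /dy e [ybar k + _]addrC addrK /mm Sb_rho.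
  have -> : sS ubar ybar k = 0.
    rewrite /sS /du subrr mulmx0 add0r big1 // => j _; exact: aY_bar.
  rewrite mulmx0 subr0 -!scalemxAr scalerA mulfV // scale1r //.
by move=> k; apply: (main p); rewrite leq_addl.
Qed.

Lemma Gamma_u u y : Gamma D u y vbar zbar = Gamma D ubar y vbar zbar + (Fo D)^T *m du u.
Proof.
rewrite /Gamma /du mulmxBr.
rewrite [in LHS](addsub _ ((Fo D)^T *m u) ((Fo D)^T *m ubar)).
set X := (Fo D)^T *m u - (Fo D)^T *m ubar.
by rewrite 4!(addrAC _ X).
Qed.

Lemma Lr_u u y : Lr u y = Lr ubar y + (ip xbar ((Fo D)^T *m du u)
  + sg * ip (Gamma D ubar y vbar zbar) ((Fo D)^T *m du u)
  + sg / 2 * ip ((Fo D)^T *m du u) ((Fo D)^T *m du u)).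
Proof.
rewrite /Lr (Gamma_u u y) (ipDr _ xbar) ipsq.
set S1 := \sum_(i < p) _. set S2 := \sum_(j < q D) _. set G1 := Gamma D ubar y vbar zbar. set a0 := (Fo D)^T *m du u.
set X1 := ip G1 G1. set X2 := ip G1 a0. set X3 := ip a0 a0. set X4 := ip xbar G1. set X5 := ip xbar a0. field; rewrite ?pnatr_eq0 // ?oner_eq0 //.
Qed.

Lemma Lr_yprime (y' : Ysp D) : (forall k, sg *: aY y' k = Sb k) -> forall u,
  Lr u y' = Lr u ybar + ip delta u + (Lr ubar y' - Lr ubar ybar - ip delta ubar).
Proof.
move=> key u; rewrite !(Lr_u u).
have hG' : Gamma D ubar y' vbar zbar = Gamma D ubar ybar vbar zbar + \sum_k aY y' k.
  rewrite !Gamma_exp (eq_bigr (fun=> 0) (fun i _ => aY_bar i)) big1_eq addr0.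
  by rewrite addrA.
have hd : sg * ip (\sum_k aY y' k) ((Fo D)^T *m du u) = ip delta (du u).
  rewrite -ipZl scaler_sumr (eq_bigr _ (fun k _ => key k)) ip_suml.
  by rewrite /delta /deltabar /betaU ip_suml; apply: eq_bigr => i _; rewrite ip_mulT.
rewrite hG' ipDl mulrDr hd /du ipBr; lra.
Qed.

Lemma master (fN : forall u, (f D u != -oo)%E) (fex : exists u, (f D u != +oo)%E)
  (hubar : (f D ubar != +oo)%E)
  (y' : Ysp D)
  (hy' : forall i : 'I_(p),
     is_argmin (fun yi : 'cV[R]_(dY D i) =>
        (Lsig D ubar (blk D ybar y' i yi) vbar zbar xbar
         + (sigma D / 2 * qn (Ttheta D i) (yi - ybar i))%:E)%E) (y' i))
  (uplus : 'cV[R]_(dU D)) (yplus : Ysp D) :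
  let gambar := - Gamma D ubar ybar vbar zbar in
  let delta := deltabar D xbar ybar gambar in
  let pl := last_block hp in
  let joint := fun uy : 'cV[R]_(dU D) * Ysp D =>
     (Lsig D uy.1 uy.2 vbar zbar xbar
      + (sigma D / 2 *
           ipW D (truncW D (p) (uy.1 - ubar, fun k => uy.2 k - ybar k))
                 (Hat D (p).-1 (truncW D (p) (uy.1 - ubar, fun k => uy.2 k - ybar k)))
         + sigma D / 2 * qn (Ttheta D pl) (uy.2 pl - ybar pl))%:E)%E in
  let ysteps := forall i : 'I_(p),
     is_argmin (fun yi : 'cV[R]_(dY D i) =>
        (Lsig D uplus (blk D yplus y' i yi) vbar zbar xbar
         + (sigma D / 2 * qn (Ttheta D i) (yi - ybar i))%:E)%E) (yplus i) in
  (is_argmin joint (uplus, yplus) <->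
     (is_argmin (fun u : 'cV[R]_(dU D) =>
        (Lsig D u ybar vbar zbar xbar
         + (ip delta u + sigma D / 2 * qn (Tf D) (u - ubar))%:E)%E) uplus
      /\ ysteps))
  /\
  (is_argmin joint (uplus, yplus) <->
     (is_argmin (fun u : 'cV[R]_(dU D) =>
        (Lsig D u y' vbar zbar xbar
         + (sigma D / 2 * qn (Tf D) (u - ubar))%:E)%E) uplus
      /\ ysteps)).
Proof.
move=> gambar delta0 pl joint ysteps.
have hfu : f D ubar \is a fin_num by rewrite fin_numE hubar fN.
have key := back_key y' hfu hy'.
have hJ : forall u y, joint (u, y) = (f D u + (Phr u + Ssum u y + Cst)%:E)%E.
  move=> u y; rewrite -main_id /joint /= (Lsig_r hgf) -addeA -EFinD //.
have hst : f D uplus \is a fin_num -> (ysteps <-> Ssum uplus yplus = 0).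
  move=> hf; rewrite Ssum_eq0; split => h i.
    have := (step_char _ _ _ _ _ hf).1 (h i); rewrite tt_mm; last by move=> k _; apply: key.
    by move=> e; rewrite /dy {1}e [ybar i + _]addrC addrK.
  apply/(step_char _ _ _ _ _ hf); rewrite tt_mm; last by move=> k _; apply: key.
  by rewrite -h /dy addrC subrK.
have F := @final_abs R _ _ (f D) Phr Ssum Cst joint ysteps uplus yplus fN fex hJ Ssum_ge0 Ssum_ex hst.
have e1 : forall u, (Lsig D u ybar vbar zbar xbar
         + (ip delta0 u + sigma D / 2 * qn (Tf D) (u - ubar))%:E)%E = (f D u + (Phr u)%:E)%E.
  by move=> u; rewrite (Lsig_r hgf) -addeA -EFinD.
have e2 : forall u, (Lsig D u y' vbar zbar xbar
         + (sigma D / 2 * qn (Tf D) (u - ubar))%:E)%E =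
     (f D u + (Phr u + (Lr ubar y' - Lr ubar ybar - ip delta ubar))%:E)%E.
  move=> u; rewrite (Lsig_r hgf) -addeA -EFinD (Lr_yprime y' key) /Phr; congr (_ + _%:E)%E.
  rewrite /du; lra.
split.
  by rewrite (argmin_ext _ _ _ e1).
by rewrite (argmin_ext _ _ _ e2) shift_argmin.
Qed.

End Setup.

Theorem proposition3p1 (R : realType) (D : data R)
  (hp : (0 < p D)%N) (hq : (0 < q D)%N)
  (hf : closed_fun (f D) /\ proper_fun (f D) /\ convex_fun (f D))
  (hg : closed_fun (g D) /\ proper_fun (g D) /\ convex_fun (g D))
  (hP : forall i, psd (Po D i)) (hQ : forall j, psd (Qo D j))
  (hsigma : 0 < sigma D)
  (hE : forall i, pd (Eth D i))
  (hET : forall i, psd (Eth D i - ((sigma D)^-1 *: Po D i + Ao D i *m (Ao D i)^T)))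
  (hTf : psd (Tf D))
  (ubar : 'cV[R]_(dU D)) (ybar : Ysp D) (vbar : 'cV[R]_(dV D)) (zbar : Zsp D)
  (xbar : 'cV[R]_(dX D))
  (hubar : f D ubar != +oo%E) (hvbar : g D vbar != +oo%E)
  (y' : Ysp D)
  (hy' : forall i : 'I_(p D),
     is_argmin (fun yi : 'cV[R]_(dY D i) =>
        (Lsig D ubar (blk D ybar y' i yi) vbar zbar xbar
         + (sigma D / 2 * qn (Ttheta D i) (yi - ybar i))%:E)%E) (y' i))
  (uplus : 'cV[R]_(dU D)) (yplus : Ysp D) :
  let gambar := - Gamma D ubar ybar vbar zbar in
  let delta := deltabar D xbar ybar gambar in
  let pl := last_block hp in
  let joint := fun uy : 'cV[R]_(dU D) * Ysp D =>
     (Lsig D uy.1 uy.2 vbar zbar xbar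
      + (sigma D / 2 *
           ipW D (truncW D (p D) (uy.1 - ubar, fun k => uy.2 k - ybar k))
                 (Hat D (p D).-1 (truncW D (p D) (uy.1 - ubar, fun k => uy.2 k - ybar k)))
         + sigma D / 2 * qn (Ttheta D pl) (uy.2 pl - ybar pl))%:E)%E in
  let ysteps := forall i : 'I_(p D),
     is_argmin (fun yi : 'cV[R]_(dY D i) =>
        (Lsig D uplus (blk D yplus y' i yi) vbar zbar xbar
         + (sigma D / 2 * qn (Ttheta D i) (yi - ybar i))%:E)%E) (yplus i) in
  (is_argmin joint (uplus, yplus) <->
     (is_argmin (fun u : 'cV[R]_(dU D) =>
        (Lsig D u ybar vbar zbar xbar
         + (ip delta u + sigma D / 2 * qn (Tf D) (u - ubar))%:E)%E) uplus
      /\ ysteps))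
  /\
  (is_argmin joint (uplus, yplus) <->
     (is_argmin (fun u : 'cV[R]_(dU D) =>
        (Lsig D u y' vbar zbar xbar
         + (sigma D / 2 * qn (Tf D) (u - ubar))%:E)%E) uplus
      /\ ysteps)).
Proof.
have hPs : forall i, (Po D i)^T = Po D i by move=> i; case: (hP i).
have hEs : forall i, (Eth D i)^T = Eth D i by move=> i; case: (hE i).
have hEu : forall i, Eth D i \in unitmx by move=> i; apply: pd_unit.
case: hg => _ [[gN _] _].
have hgf : g D vbar \is a fin_num by rewrite fin_numE hvbar gN.
case: hf => _ [[fN fex] _].
exact: (master D ubar ybar vbar zbar xbar hPs hp hEs hEu hsigma hE hgf fN fex hubar y' hy' uplus yplus).
Qed.
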